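(* Assume $\operatorname{non}(\mathcal N)=\mathfrak c$. Then $\mathcal{ANM}_{\mathfrak c}\setminus\mathcal{ND}_{\mathfrak c}$ is $2^{\mathfrak c}$-coneable in $\left(\mathbb R^{[0,1]}\right)^{\mathfrak c}$.
   Context: For a regular infinite cardinal $\kappa$, a $\kappa$-sequence $(x_\alpha)_{\alpha<\kappa}$ converges to $x$ if for every neighbourhood $U$ of $x$ there is $\alpha_0<\kappa$ with $x_\alpha\in U$ for all $\alpha_0<\alpha<\kappa$; $\left(\mathbb R^{[0,1]}\right)^{\kappa}$ is the real vector space of $\kappa$-sequences of functions $[0,1]\to\mathbb R$ with indexwise operations. $\lambda$ is Lebesgue measure, $\mathcal N$ the null subsets of $[0,1]$, $\operatorname{non}(\mathcal N)$ the least cardinality of a non-null subset of $[0,1]$, $\mathfrak c=2^{\aleph_0}$. $\mathcal{ANM}_{\kappa}$: $\kappa$-sequences of Lebesgue measurable $f_\alpha:[0,1]\to\mathbb R$ converging a.e. to a measurable $f$ but not converging in measure to $f$ (for some $\varepsilon>0$, $\lambda(\{|f_\alpha-f|\ge\varepsilon\})\not\to0$). $\mathcal{ND}_{\kappa}$: $\kappa$-sequences of Lebesgue measurable $f_\alpha:[0,1]\to\mathbb R$ dominated a.e. by a common integrable $g$, converging a.e. to an integrable $f$, with $\int|f_\alpha-f|\,d\lambda\not\to0$. $S$ is positively (resp. negatively) $\mu$-coneable if there is a linearly independent $B\subset S$ of cardinality $\mu$ all of whose finite combinations with all coefficients $>0$ (resp. $<0$) lie in $S$; $\mu$-coneable means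 both. *)

(* Defs.v *)
From HB Require Import structures.
From mathcomp Require Import all_boot all_order all_algebra.
From mathcomp Require Import all_classical all_reals all_analysis.
Import Order.TTheory GRing.Theory Num.Theory.

Set Implicit Arguments.
Unset Strict Implicit.
Unset Printing Implicit Defensive.

Local Open Scope classical_set_scope.
Local Open Scope ring_scope.

(* The real line equipped with the (completed) Lebesgue sigma-algebra,
   i.e. the measurable type on which [completed_lebesgue_measure] lives.
   Measurable functions [LT R -> R] are exactly the Lebesgue-measurable ones. *)
Definition LT (R : realType) :=
  ltac:(let t := type of (@completed_lebesgue_measure R) in
        match t with set ?T -> _ => exact T end).

Notation lam := (@completed_lebesgue_measure _).

(* [I] (with its order) is a well-ordered set of order type the initial
   ordinal c = 2^aleph0 = |R|: a well-order of cardinality |R| all of whose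
   proper initial segments have cardinality < |R|. *)
Definition continuum_index (R : realType) (d : Order.disp_t) (I : orderType d)
    : Prop :=
  well_founded (fun a b : I => (a < b)%O) /\
  ([set: I] #= [set: R])%card /\
  (forall a : I, ~ ([set: R] #<= [set b : I | (b < a)%O])%card).

Definition kconv (R : realType) (d : Order.disp_t) (I : orderType d)
    (u : I -> R) (l : R) : Prop :=
  forall e : R, 0 < e -> exists a0 : I, forall a : I, (a0 < a)%O -> `|u a - l| < e.

Definition kconv0 (R : realType) (d : Order.disp_t) (I : orderType d)
    (u : I -> \bar R) : Prop :=
  forall e : R, 0 < e -> exists a0 : I, forall a : I, (a0 < a)%O ->
    (u a < e%:E)%E.

Section classes.
Variables (R : realType) (d : Order.disp_t) (I : orderType d).

Definition ANM (F : I -> LT R -> R) : Prop :=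
  (forall a, measurable_fun (`[0%R, 1%R] : set (LT R)) (F a)) /\
  exists f : LT R -> R,
    measurable_fun (`[0%R, 1%R] : set (LT R)) f /\
    {ae lam, forall x : LT R, x \in `[0%R, 1%R] ->
        kconv (fun a => F a x) (f x)} /\
    exists e : R, 0 < e /\
      ~ kconv0 (fun a => lam (`[0%R, 1%R] `&` [set x : LT R | e <= `|F a x - f x|])).

Definition ND (F : I -> LT R -> R) : Prop :=
  (forall a, measurable_fun (`[0%R, 1%R] : set (LT R)) (F a)) /\
  (exists g : LT R -> R,
    lam.-integrable (`[0%R, 1%R] : set (LT R)) (EFin \o g) /\
    forall a, {ae lam, forall x : LT R, x \in `[0%R, 1%R] -> `|F a x| <= g x}) /\
  exists f : LT R -> R,
    lam.-integrable (`[0%R, 1%R] : set (LT R)) (EFin \o f) /\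
    {ae lam, forall x : LT R, x \in `[0%R, 1%R] ->
        kconv (fun a => F a x) (f x)} /\
    ~ kconv0 (fun a => (\int[lam]_(x in `[0%R, 1%R]) (`|F a x - f x|)%:E)%E).

(* The ambient vector space (R^[0,1])^I, represented as I-sequences of
   functions R -> R vanishing outside [0,1] (canonically isomorphic). *)
Definition supported01 (F : I -> LT R -> R) : Prop :=
  forall a (x : LT R), x \notin `[0%R, 1%R] -> F a x = 0.

Definition lincomb (n : nat) (c : 'I_n -> R) (b : 'I_n -> I -> LT R -> R)
    : I -> LT R -> R :=
  fun a x => \sum_(i < n) c i * b i a x.

Definition lin_indep (B : set (I -> LT R -> R)) : Prop :=
  forall (n : nat) (c : 'I_n -> R) (b : 'I_n -> I -> LT R -> R),
    injective b -> (forall i, B (b i)) ->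
    lincomb c b = (fun _ _ => 0) -> forall i, c i = 0.

(* S is positively (resp. negatively) mu-coneable, mu = |M| *)
Definition pos_coneable (M : Type) (S : set (I -> LT R -> R)) : Prop :=
  exists B : set (I -> LT R -> R),
    B `<=` S /\ ([set: M] #= B)%card /\ lin_indep B /\
    forall (n : nat) (c : 'I_n.+1 -> R) (b : 'I_n.+1 -> I -> LT R -> R),
      (forall i, B (b i)) -> (forall i, 0 < c i) -> S (lincomb c b).

Definition neg_coneable (M : Type) (S : set (I -> LT R -> R)) : Prop :=
  exists B : set (I -> LT R -> R),
    B `<=` S /\ ([set: M] #= B)%card /\ lin_indep B /\
    forall (n : nat) (c : 'I_n.+1 -> R) (b : 'I_n.+1 -> I -> LT R -> R),
      (forall i, B (b i)) -> (forall i, c i < 0) -> S (lincomb c b).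

Definition coneable (M : Type) (S : set (I -> LT R -> R)) : Prop :=
  pos_coneable M S /\ neg_coneable M S.

End classes.

(* Main.v *)
Require Import Defs.
From HB Require Import structures.
From mathcomp Require Import all_boot all_order all_algebra.
From mathcomp Require Import all_classical all_reals all_analysis.
From mathcomp Require Import lra.
Import Order.TTheory GRing.Theory Num.Theory.
Local Open Scope classical_set_scope.
Local Open Scope ring_scope.

Module Aux.
Set Implicit Arguments.
Unset Strict Implicit.
Unset Printing Implicit Defensive.

Section Coding.
Variable R : realType.

Definition jR (x : R) : nat -> bool :=
  fun n => if @unpickle rat n is Some q then (ratr q < x) else false.

Lemma jR_inj : injective jR.
Proof.
have key (x y : R) : x < y -> jR x <> jR y.
  move=> xy; have [q] := rat_in_itvoo xy; rewrite in_itv /= => /andP[a b] E.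
  have := congr1 (fun f => f (pickle q)) E; rewrite /jR pickleK b.
  by rewrite ltNge (ltW a).
move=> x y E; apply/eqP; rewrite eq_le !leNgt; apply/andP; split; apply/negP => lt.
- exact: (key _ _ lt (esym E)).
- exact: (key _ _ lt E).
Qed.

Definition sfin (b : nat -> bool) (N : nat) : R :=
  \sum_(k < N) (b k)%:R / 4 ^+ k.+1.

Lemma sfinS b N : sfin b N.+1 = sfin b N + (b N)%:R / 4 ^+ N.+1.
Proof. by rewrite /sfin big_ord_recr. Qed.

Lemma sfin_key b N k :
  sfin b (N + k) + 3^-1 / 4 ^+ (N + k) <= sfin b N + 3^-1 / 4 ^+ N.
Proof.
elim: k => [|k IH]; first by rewrite addn0.
apply: le_trans IH; rewrite addnS sfinS.
have -> : (4 ^+ (N + k).+1)^-1 = (4 ^+ (N + k))^-1 / 4 :> R by rewrite exprS invfM mulrC.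
have : 0 <= (4 ^+ (N + k))^-1 :> R by rewrite invr_ge0 exprn_ge0.
have : (b (N + k))%:R <= 1 :> R by case: (b _).
have : 0 <= (b (N + k))%:R :> R by [].
move: (4 ^+ (N + k))^-1 ((b (N + k))%:R) => v t t0 t1 v0.
nra.
Qed.

Lemma sfin_mono b N k : sfin b N <= sfin b (N + k).
Proof.
elim: k => [|k IH]; first by rewrite addn0.
by rewrite addnS sfinS (le_trans IH)// lerDl divr_ge0// exprn_ge0.
Qed.

Lemma sfin_le b M : sfin b M <= 3^-1.
Proof.
have := sfin_key b 0 M; rewrite add0n /sfin big_ord0 add0r expr0 divr1.
move=> h; apply: le_trans h; rewrite lerDl divr_ge0 // ?exprn_ge0 //.
Qed.

Definition iotaR (b : nat -> bool) : R := sup (range (sfin b)).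

Lemma iotaR_hs b : has_sup (range (sfin b)).
Proof.
split; first by exists (sfin b 0); exists 0%N.
by exists 3^-1 => _ [M _ <-]; exact: sfin_le.
Qed.

Lemma iotaR_ge b N : sfin b N <= iotaR b.
Proof. by apply: sup_upper_bound; [exact: iotaR_hs | exists N]. Qed.

Lemma iotaR_le b N : iotaR b <= sfin b N + 3^-1 / 4 ^+ N.
Proof.
apply: ge_sup; first by exists (sfin b 0); exists 0%N.
move=> _ [M _ <-].
have [NM|MN] := leqP N M.
  have := sfin_key b N (M - N); rewrite subnKC //.
  move=> h; apply: le_trans h; rewrite lerDl divr_ge0 // ?exprn_ge0 //.
have := sfin_mono b M (N - M); rewrite subnKC ?(ltnW MN)//.
move=> h; apply: (le_trans h); rewrite lerDl divr_ge0 // ?exprn_ge0 //.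
Qed.

Lemma sfin_eq (b b' : nat -> bool) (N : nat) : (forall k, (k < N)%N -> b k = b' k) -> sfin b N = sfin b' N.
Proof. by move=> h; apply: eq_bigr => i _; rewrite h. Qed.

Lemma iotaR_lt b b' n : (forall k, (k < n)%N -> b k = b' k) -> b n = true -> b' n = false ->
  iotaR b' < iotaR b.
Proof.
move=> eqk bn b'n.
apply: (le_lt_trans (iotaR_le b' n.+1)); apply: (lt_le_trans _ (iotaR_ge b n.+1)).
rewrite !sfinS bn b'n (@sfin_eq b b' n eqk) /= mul0r addr0 mul1r ltrD2l.
have : 0 < (4 ^+ n.+1)^-1 :> R by rewrite invr_gt0 exprn_gt0.
move: (4 ^+ n.+1)^-1 => v v0; lra.
Qed.

Lemma iotaR_inj : injective iotaR.
Proof.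
move=> b b' E; apply/funext => n; apply/eqP/negPn/negP => hn.
have ex : exists n, b n != b' n by exists n.
case: (ex_minnP ex) => m hm hmin.
have eqk k : (k < m)%N -> b k = b' k.
  move=> km; apply/eqP/negPn/negP => hk.
  by have := hmin k hk; rewrite leqNgt km.
move: hm; case bm: (b m); case b'm: (b' m) => // _.
- by have := @iotaR_lt b b' m eqk bm b'm; rewrite E ltxx.
- have eqk' k : (k < m)%N -> b' k = b k by move=> /eqk ->.
  by have := @iotaR_lt b' b m eqk' b'm bm; rewrite E ltxx.
Qed.

Definition rho (x : R) : nat -> bool :=
  match pselect (exists b, iotaR b = x) with
  | left H => projT1 (cid H)
  | right _ => fun _ => false
  end.

Lemma rho_iota b : rho (iotaR b) = b.
Proof.
rewrite /rho; case: pselect => [H|]; last by case; exists b.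
by case: (cid H) => b' /= /iotaR_inj.
Qed.

Definition decpq (c : nat -> bool) : (nat -> nat -> bool) * (nat -> bool) :=
  (fun k m => c (pickle (k.+1, m)), fun m => c (pickle (0%N, m))).

Definition encpq (pq : (nat -> nat -> bool) * (nat -> bool)) : nat -> bool :=
  fun n => match @unpickle (nat * nat)%type n with
           | Some (0%N, m) => pq.2 m
           | Some (k.+1, m) => pq.1 k m
           | None => false end.

Lemma decpqK pq : decpq (encpq pq) = pq.
Proof.
case: pq => p q; rewrite /decpq /encpq; congr pair.
- by apply/funext => k; apply/funext => m; rewrite pickleK.
- by apply/funext => m; rewrite pickleK.
Qed.

End Coding.


Lemma inj_le T U (A : set T) (B : set U) (h : T -> U) :
  {in A &, injective h} -> h @` A `<=` B -> (A #<= B)%card.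
Proof.
move=> hi hAB; rewrite -(card_le_eql (inj_card_eq hi)); exact: subset_card_le.
Qed.

Section Sep.
Variable R : realType.

Definition eS (S : set R) (pq : (nat -> nat -> bool) * (nat -> bool)) : R :=
  if pselect (forall k, (exists x, S x /\ jR x = pq.1 k) <-> pq.2 k) then 1 else 0.

Lemma sep m (Sf : 'I_m -> set R) : injective Sf -> forall i0,
  exists pq, forall i, eS (Sf i) pq = (i == i0)%:R.
Proof.
move=> Sinj i0.
have : forall k : nat, exists x : R, forall i : 'I_m, val i = k -> i != i0 ->
    ~ (Sf i x <-> Sf i0 x).
  move=> k; case: (ltnP k m) => km; last first.
    by exists 0 => i ik; move: (ltn_ord i); rewrite ik ltnNge km.
  case: (eqVneq (Ordinal km) i0) => [e|ne].
    exists 0 => i ik; have -> : i = Ordinal km by apply: val_inj.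
    by rewrite e eqxx.
  have neq : Sf (Ordinal km) <> Sf i0 by move=> /Sinj; apply/eqP.
  have [x hx] : exists x, ~ (Sf (Ordinal km) x <-> Sf i0 x).
    apply: contra_notP neq => h; apply/funext => x; apply/propext.
    by apply: contrapT => hh; apply: h; exists x.
  exists x => i ik _; have -> : i = Ordinal km by apply: val_inj.
  exact: hx.
move=> /choice[xf hxf].
exists (fun k => jR (xf k), fun k => `[< Sf i0 (xf k) >]).
move=> i; rewrite /eS; case: pselect => /= [H|H].
- case: eqVneq => // ne; exfalso.
  have := H (val i); have := hxf (val i) i erefl ne.
  move=> hn [h1 h2]; apply: hn; split.
  + by move=> Sx; have := h1 (ex_intro _ (xf i) (conj Sx erefl)); move/asboolP.
  + by move=> S0x; have [x [Sx /jR_inj xe]] := h2 (asboolT S0x); rewrite -xe.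
- case: eqVneq => // ei; exfalso; apply: H => k; rewrite ei; split.
  + by move=> [x [Sx /jR_inj <-]]; apply/asboolP.
  + by move/asboolP => Sx; exists (xf k).
Qed.
End Sep.


Section Main.
Variables (R : realType) (d : Order.disp_t) (I : orderType d).
Variables (f : I -> R) (gR : R -> I).
Hypothesis fg : forall x, f (gR x) = x.
Hypothesis hI : forall a : I, ~ ([set: R] #<= [set b : I | (b < a)%O])%card.
Hypothesis hN : forall A : set (LT R), A `<=` `[0%R, 1%R] ->
  ~ ([set: R] #<= A)%card -> lam.-negligible A.

Lemma gR_inj : injective gR.
Proof. by move=> x y e; rewrite -(fg x) -(fg y) e. Qed.

Definition sigI (a : I) := decpq (rho (f a)).

Lemma sig_surj pq : exists a, sigI a = pq.
Proof. by exists (gR (iotaR R (encpq pq))); rewrite /sigI fg rho_iota decpqK. Qed.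

Lemma no_max (a0 : I) : exists a : I, (a0 < a)%O.
Proof.
apply: contrapT => H; apply: (@hI a0).
pose phi (x : R) := if x < f a0 then x else x + 1.
apply: (@inj_le _ _ setT _ (gR \o phi)).
  move=> x y _ _ /= /gR_inj; rewrite /phi.
  case: (ltP x) => hx; case: (ltP y) => hy; lra.
move=> _ [x _ <-] /=; rewrite lt_neqAle; apply/andP; split.
  apply/negP => /eqP e; have := fg (phi x); rewrite e /phi.
  by case: ltP => hx; lra.
by rewrite leNgt; apply/negP => h; apply: H; exists (gR (phi x)).
Qed.

Definition Aset (a : I) : set R := [set x | 0 < x /\ x <= 1 /\ (gR x < a)%O].

Lemma Aset_negl a : lam.-negligible (Aset a : set (LT R)).
Proof.
apply: hN.
  by move=> x [x0 [x1 _]]; rewrite /= in_itv /= x1 ltW.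
move=> h; apply: (@hI a); apply: (card_le_trans h).
apply: (@inj_le _ _ _ _ gR); first by move=> x y _ _; exact: gR_inj.
by move=> _ [x [_ [_ hx]] <-].
Qed.

Definition good (a : I) (x : R) : bool := (0 < x) && (x <= 1) && ~~ (gR x < a)%O.
Definition w (x : R) : R := (x `^ (-1)) ^+ 2.
Definition Phi (S : set R) (a : I) (x : R) : R :=
  if x == 0 then eS S (sigI a) else if good a x then w x else 0.
Definition PhiT (S : set R) : I -> LT R -> R := Phi S.


Lemma toT (D : set R) (g : R -> R) : measurable D -> measurable_fun D g ->
  measurable_fun (D : set (LT R)) (g : LT R -> R).
Proof. by move=> mD mg _ Y mY; apply: sub_caratheodory; exact: mg. Qed.

Lemma mT (D : set R) : measurable D -> measurable (D : set (LT R)).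
Proof. by move=> mD; apply: sub_caratheodory. Qed.

Lemma negl0 : lam.-negligible ([set 0] : set (LT R)).
Proof.
exists [set 0]; split => //; first exact: (mT (measurable_set1 (0:R))).
exact: (lebesgue_measure_set1 (0:R)).
Qed.

Definition Psi (x : R) : R := \1_(`]0, 1] : set R) x * w x.

Lemma mPsi : measurable_fun setT Psi.
Proof.
apply: measurable_realfun.measurable_funM; first exact: measurable_realfun.measurable_indic.
rewrite /w; apply: measurable_realfun.measurable_funX; exact: measurable_realfun.measurable_powR.
Qed.

Variables (G : I -> LT R -> R) (K : R).
Hypothesis K0 : K != 0.
Hypothesis hG : forall a (x : R), x != 0 -> G a x = K * (if good a x then w x else 0).

Lemma G_supp : supported01 G.
Proof.
move=> a x; rewrite /= in_itv /= => hx.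
have x0 : (x : R) != 0 by apply: contraNneq hx => ->; rewrite lexx ler01.
rewrite hG // /good; case: ifP; last by rewrite mulr0.
by move=> /andP[/andP[h1 h2] _]; move: hx; rewrite h2 ltW.
Qed.

Lemma G_meas a : measurable_fun (`[0%R, 1%R] : set (LT R)) (G a).
Proof.
have m01 : measurable (`[0%R, 1%R] : set R) by exact: measurable_itv.
have mK : measurable_fun (`[0%R, 1%R] : set (LT R)) (fun x : R => K * Psi x).
  apply: toT => //; apply: measurable_realfun.measurable_funM; first exact: measurable_cst.
  exact: measurable_funS mPsi.
apply/measurable_realfun.measurable_EFinP.
apply: (ae_measurable_fun completed_lebesgue_measure_is_complete (f := EFin \o (fun x : R => K * Psi x))).
  have [N [mN N0 AN]] := Aset_negl a.
  exists ([set 0] `|` N); split.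
  - apply: measurableU => //; exact: (mT (measurable_set1 (0:R))).
  - have h0 : lam ([set (0%R:R)] : set (LT R)) = 0%E := lebesgue_measure_set1 (0:R).
    apply/eqP; rewrite eq_le measure_ge0 andbT.
    apply: (le_trans (measureU2 _ _ _)); [exact: (mT (measurable_set1 (0:R)))|exact: mN|].
    apply: (@le_trans _ _ (lam ([set (0%R:R)] : set (LT R)) + lam N)%E); first exact: lexx.
    by rewrite h0 N0 adde0.
  move=> x /= hx; apply: contrapT => hx'; apply: hx => x01.
  move: hx'; rewrite /= => /not_orP[x0 xN].
  have xA : ~ Aset a x by move=> /AN.
  move: x01; rewrite in_itv /= => /andP[x0' x1].
  have x0'' : (x : R) != 0 by apply/eqP.
  rewrite hG // /Psi indicE.
  have xpos : 0 < (x : R) by rewrite lt_neqAle eq_sym x0'' x0'.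
  rewrite mem_set; last by rewrite /= in_itv /= xpos x1.
  rewrite /good xpos x1 /=.
  case: ltP => hlt /=; rewrite ?mul1r // ?mulr0; exfalso; apply: xA; split => //; split => //.
exact: (measurable_realfun.measurable_EFinP _ _).2 mK.
Qed.


Let dlt := Num.min 1 `|K|.
Lemma dlt_gt0 : 0 < dlt.
Proof. by rewrite lt_min ltr01 normr_gt0. Qed.

Lemma w_bound (x k : R) : 0 < x -> x <= 1 -> x <= k -> 1 <= k * w x.
Proof.
move=> x0 x1 xk; rewrite /w powR_inv1 ?(ltW x0)//.
have xy : x * x^-1 = 1 by rewrite divff // gt_eqF.
have y0 : 0 < x^-1 by rewrite invr_gt0.
move: xy y0; move: (x^-1) => y xy y0.
rewrite expr2. nra.
Qed.

Lemma w_ge0 x : 0 <= w x.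
Proof. by rewrite /w exprn_ge0 // powR_ge0. Qed.

Lemma setB : [set y : R | 1 <= `|y - 0|] = ~` [set` `]-1%R, 1%R[].
Proof.
apply/seteqP; split => y /=; rewrite subr0 in_itv /= ler_normr.
  by move=> /orP[h|h] /andP[h1 h2]; lra.
move=> h; apply/orP; apply: contrapT => h'; apply: h; apply/andP.
split; apply: contrapT => h''; apply: h'; [right|left]; lra.
Qed.

Lemma G_lower a : (dlt%:E <= lam (`[0%R, 1%R] `&` [set x : LT R | (1 <= `|G a x - 0|)%R]))%E.
Proof.
have [N [mN N0 AN]] := Aset_negl a.
pose Y : set (LT R) := `[0%R, 1%R] `&` [set x : LT R | (1 <= `|G a x - 0|)%R].
change (dlt%:E <= lam Y)%E.
have mY : measurable Y.
  have h := G_meas a (mT (measurable_itv _)) (measurableC (measurable_itv `]-1%R, 1%R[)).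
  by rewrite -setB in h; exact: h.
have sub : (`]0%R, dlt] : set (LT R)) `<=` Y `|` N.
  move=> x /=; rewrite in_itv /= => /andP[x0 xd].
  have [xN|xN] := pselect (N x); first by right.
  left; have xA : ~ Aset a x by move=> /AN.
  move: xd; rewrite le_min => /andP[x1 xK].
  split; first by rewrite /= in_itv /= x1 ltW.
  rewrite /= hG ?gt_eqF // /good x0 x1 /=.
  case: ltP => hlt /=.
    by exfalso; apply: xA; split => //; split.
  rewrite subr0 normrM (ger0_norm (w_ge0 _)).
  exact: w_bound.
have hd : lebesgue_measure (`]0%R, dlt] : set R) = dlt%:E.
  by rewrite lebesgue_measure_itv /= lte_fin dlt_gt0 sube0.
apply: (@le_trans _ _ (lam (`]0%R, dlt] : set (LT R)))).
  by rewrite -hd; exact: lexx.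
apply: (@le_trans _ _ (lam (Y `|` N))).
  apply: le_measure => //; rewrite inE //; [exact: (mT (measurable_itv _))|exact: measurableU].
apply: (le_trans (measureU2 _ mY mN)); apply: (@le_trans _ _ (lam Y + lam N)%E); first exact: lexx.
by rewrite N0 adde0.
Qed.

Lemma G_ANM : ANM G.
Proof.
split; first exact: G_meas.
exists (fun _ => 0); split; first exact: measurable_cst.
split.
  apply: (negligibleS _ negl0) => x /= hx; apply: contrapT => x0; apply: hx => _ e e0.
  exists (gR x) => a ha; rewrite hG; last by apply/eqP.
  by rewrite /good ha andbF mulr0 subrr normr0.
exists 1; split => // hk.
have [a0 ha0] := hk dlt dlt_gt0.
have [a ha] := no_max a0.
have := ha0 a ha; have := G_lower a.
by move=> h1 h2; have := le_lt_trans h1 h2; rewrite ltxx.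
Qed.


Lemma w_bound2 (x m : R) : 0 < x -> 0 < m -> x <= m^-1 -> m ^+ 2 <= w x.
Proof.
move=> x0 m0 xm; rewrite /w powR_inv1 ?(ltW x0)//.
have xm' : x * m <= 1 by rewrite -ler_pdivlMr // mul1r.
have xy : x * x^-1 = 1 by rewrite divff // gt_eqF.
have y0 : 0 < x^-1 by rewrite invr_gt0.
move: xy y0; move: (x^-1) => y xy y0.
rewrite !expr2; nra.
Qed.

Lemma G_notND : ~ ND G.
Proof.
move=> [_ [[g [gi gdom]] _]].
pose a := gR 0.
have [N [mN N0 AN]] := Aset_negl a.
have [M [mM M0 AM]] := gdom a.
move/integrableP: gi => [mg gfin].
have m01 : measurable (`[0%R, 1%R] : set (LT R)) := mT (measurable_itv _).
have key n : ((`|K| * n.+1%:R)%:E <=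
    \int[lam]_(x in (`[0%R, 1%R] : set (LT R))) `|(EFin \o g) x|)%E.
  pose c := `|K| * n.+1%:R ^+ 2.
  have c0 : 0 <= c by rewrite mulr_ge0.
  pose U : set (LT R) := (`]0%R, (n.+1%:R)^-1]%classic : set (LT R)).
  have mU : measurable U := mT (measurable_itv _).
  have hInt : (\int[lam]_(x in (`[0%R, 1%R] : set (LT R))) (c * \1_U x)%:E
      = (`|K| * n.+1%:R)%:E)%E.
    under eq_integral do rewrite EFinM.
    rewrite ge0_integralZl_EFin //; last by apply/measurable_realfun.measurable_EFinP; exact: measurable_realfun.measurable_indic.
    rewrite integral_indic // setIidl; last first.
      move=> x; rewrite /U /= in_itv /= => /andP[x0 x1].
      rewrite in_itv /= (ltW x0) /=.
      by apply: le_trans x1 _; rewrite invf_le1 // ler1n.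
    have hU : lebesgue_measure (`]0%R, (n.+1%:R)^-1] : set R) = ((n.+1%:R)^-1)%:E.
      by rewrite lebesgue_measure_itv /= lte_fin invr_gt0 ltr0n sube0.
    have hU' : lam U = ((n.+1%:R)^-1)%:E := hU.
    apply: (@eq_trans _ _ (c%:E * lam U)%E); first by [].
    rewrite hU' -EFinM /c; congr EFin.
    by rewrite expr2 mulrA mulfK // pnatr_eq0.
  rewrite -hInt.
  apply: (@ae_ge0_le_integral _ _ _ lam _ m01 (fun x => (c * \1_U x)%:E)
    (fun x => (`|g x|)%:E)).
  - by move=> x _; rewrite lee_fin mulr_ge0 // indicE.
  - apply/measurable_realfun.measurable_EFinP.
    apply: measurable_realfun.measurable_funM; first exact: measurable_cst.
    exact: measurable_realfun.measurable_indic.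
  - by move=> x _; rewrite lee_fin.
  - apply/measurable_realfun.measurable_EFinP.
    apply: (@measurableT_comp _ _ _ _ _ _ (fun y : R => `|y|) _ g); first exact: measurable_realfun.normr_measurable.
    exact/measurable_realfun.measurable_EFinP.
  exists (M `|` N); split; first exact: measurableU.
    apply/eqP; rewrite eq_le measure_ge0 andbT.
    apply: (le_trans (measureU2 _ mM mN)).
    apply: (@le_trans _ _ (lam M + lam N)%E); first exact: lexx.
    by rewrite M0 N0 adde0.
  move=> x /= hx; apply: contrapT => /not_orP[xM xN]; apply: hx => x01.
  have hM : `|G a x| <= g x.
    apply: contrapT => h; apply: xM; apply: (AM x) => hh; apply: h; exact: hh x01.
  rewrite indicE; case: (boolP (x \in U)) => xU; last first.
    by rewrite mulr0 /= lee_fin normr_ge0.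
  move: xU; rewrite inE /U /= in_itv /= => /andP[x0 x1].
  have xle1 : (x : R) <= 1 by apply: le_trans x1 _; rewrite invf_le1 // ler1n.
  have xA : ~ Aset a x by move=> /AN.
  move: hM; rewrite hG ?gt_eqF // /good x0 xle1 /=.
  case: ltP => hlt /=.
    by exfalso; apply: xA; split => //; split.
  move=> hM; rewrite mulr1 /= lee_fin.
  apply: (le_trans _ (le_trans hM (ler_norm _))).
  rewrite normrM (ger0_norm (w_ge0 _)) /c ler_wpM2l //.
  exact: w_bound2.
have g0 : (0 <= \int[lam]_(x in (`[0%R, 1%R] : set (LT R))) `|(EFin \o g) x|)%E.
  by apply: integral_ge0 => x _; exact: abse_ge0.
have hr : (\int[lam]_(x in (`[0%R, 1%R] : set (LT R))) `|(EFin \o g) x| =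
    (fine (\int[lam]_(x in (`[0%R, 1%R] : set (LT R))) `|(EFin \o g) x|))%:E)%E.
  by rewrite fineK // ge0_fin_numE.
move: hr; set r := fine _ => hr.
have K0' : 0 < `|K| by rewrite normr_gt0.
have := key (Num.truncn (r / `|K|)); rewrite hr lee_fin => h.
have := Num.Theory.truncnS_gt (r / `|K|); rewrite ltr_pdivrMr // => h'.
by move: h'; rewrite mulrC => h'; have := le_lt_trans h h'; rewrite ltxx.
Qed.

End Main.

End Aux.
Import Aux.

Theorem mainTheorem9 (R : realType) (d : Order.disp_t) (I : orderType d) :
  continuum_index R I ->
  (forall A : set (LT R), A `<=` `[0%R, 1%R] ->
     ~ ([set: R] #<= A)%card -> lam.-negligible A) ->
  coneable (set R)
    [set F : I -> LT R -> R | supported01 F /\ ANM F /\ ~ ND F].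
Proof.
move=> [_ [cIR hI]] hN.
have /card_bijP[F [G FG GF]] := cIR.
pose f (a : I) : R := val (F (exist _ a (mem_set (Logic.I : [set: I] a)))).
pose gR (x : R) : I := val (G (exist _ x (mem_set (Logic.I : [set: R] x)))).
have fg x : f (gR x) = x.
  rewrite /f /gR; set y := G _.
  have -> : exist _ (val y) (mem_set (Logic.I : [set: I] (val y))) = y by apply: val_inj.
  by rewrite GF.
set S := [set F : I -> LT R -> R | supported01 F /\ ANM F /\ ~ ND F].
have inS (G' : I -> LT R -> R) (K : R) : K != 0 ->
    (forall a (x : R), x != 0 -> G' a x = K * (if good gR a x then w x else 0)) -> S G'.
  move=> K0 hG; split; first exact: G_supp hG.
  by split; [exact (G_ANM fg hI hN K0 hG) | exact (G_notND fg hI hN K0 hG)].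
have Phi0 S0 a : PhiT f gR S0 a 0 = eS S0 (sigI f a) by rewrite /PhiT /Phi eqxx.
have PhiN S0 a (x : R) : x != 0 ->
    PhiT f gR S0 a x = (if good gR a x then w x else 0).
  by move=> x0; rewrite /PhiT /Phi (negbTE x0).
have Phiinj : injective (PhiT f gR).
  move=> S1 S2 e; apply: contrapT => ne.
  pose Sf (i : 'I_2) := if val i == 0%N then S1 else S2.
  have Sfinj : injective Sf.
    move=> i j; rewrite /Sf.
    case: (eqVneq (val i) 0%N) => hi; case: (eqVneq (val j) 0%N) => hj e'.
    - by apply: val_inj; rewrite hi hj.
    - by exfalso; apply: ne.
    - by exfalso; apply: ne.
    - have h1 (k : 'I_2) : val k != 0%N -> val k = 1%N.
        by case: k => -[|[|k]] Hk //= _; move: Hk.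
      by apply: val_inj; rewrite (h1 i hi) (h1 j hj).
  have [pq hpq] := sep Sfinj (ord0 : 'I_2).
  have [a ha] := sig_surj fg pq.
  have := congr1 (fun F => F a (0:R)) e; rewrite /= !Phi0 ha.
  have := hpq ord0; have := hpq (Ordinal (isT : (1 < 2)%N)); rewrite /Sf /= => -> ->.
  by move/eqP; rewrite oner_eq0.
pose Bs := range (PhiT f gR).
have cardB : ([set: set R] #= Bs)%card.
  by apply: card_esym; apply: inj_card_eq => x y _ _; exact: Phiinj.
have BS : Bs `<=` S.
  move=> _ [S0 _ <-]; apply: (inS _ 1); first exact: oner_neq0.
  by move=> a x x0; rewrite mul1r PhiN.
have linB : lin_indep Bs.
  move=> n c b binj hb hcomb i.
  have : forall j, exists S0, b j = PhiT f gR S0.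
    by move=> j; have [S0 _ <-] := hb j; exists S0.
  move=> /choice[Sf hSf].
  have Sfinj : injective Sf by move=> j k e; apply: binj; rewrite !hSf e.
  have [pq hpq] := sep Sfinj i.
  have [a ha] := sig_surj fg pq.
  have := congr1 (fun F => F a (0:R)) hcomb; rewrite /lincomb /=.
  under eq_bigr do rewrite hSf Phi0 ha hpq.
  rewrite (bigD1 i) //= eqxx mulr1 big1 ?addr0 // => j /negbTE ->.
  by rewrite mulr0.
have comb (n : nat) (c : 'I_n.+1 -> R) (b : 'I_n.+1 -> I -> LT R -> R) :
    (forall i, Bs (b i)) -> forall a (x : R), x != 0 ->
    lincomb c b a x = (\sum_i c i) * (if good gR a x then w x else 0).
  move=> hb a x x0; rewrite /lincomb big_distrl /=; apply: eq_bigr => i _.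
  by have [S0 _ <-] := hb i; rewrite PhiN.
split.
  exists Bs; split => //; split => //; split => // n c b hb hc.
  apply: (inS _ (\sum_i c i)); last exact: comb.
  have : \sum_(j < n) c (lift ord0 j) >= 0 by apply: sumr_ge0 => j _; exact: ltW.
  have := hc ord0; rewrite big_ord_recl => h1 h2.
  by apply/negP => /eqP h; lra.
exists Bs; split => //; split => //; split => // n c b hb hc.
apply: (inS _ (\sum_i c i)); last exact: comb.
have : \sum_(j < n) c (lift ord0 j) <= 0 by apply: sumr_le0 => j _; exact: ltW.
have := hc ord0; rewrite big_ord_recl => h1 h2.
by apply/negP => /eqP h; lra.
Qed.
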